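(* If there exist complex unit vectors $|\psi\rangle$ and $|v_j\rangle$ ($j\in V$) in $\mathbb{C}^d$ with $\langle v_i|v_j\rangle=0$ whenever $(i,j)\in E$ that attain $\sum_{j\in V} w_j |\langle \psi|v_j\rangle|^2=\vartheta_c(G)$ (a Lovász-optimum orthogonal representation realized in the $d$-dimensional complex Hilbert space), then there exist real unit vectors $|\phi\rangle$ and $|\omega_j\rangle$ ($j\in V$) in $\mathbb{R}^{2d-1}$ with $\langle \omega_i|\omega_j\rangle=0$ whenever $(i,j)\in E$ and $\sum_{j\in V} w_j (\langle \phi|\omega_j\rangle)^2=\vartheta_c(G)$. Consequently $\vartheta_c(G)=\vartheta(G)$, and the Lovász-optimum orthogonal representation of any exclusivity graph can be realized in a real Hilbert space of suitable dimension.
   Context: Let $G=(V,E,W)$ be a (weighted) exclusivity graph with vertex set $V$, edge set $E$ and nonnegative vertex weights $w_j$. The Lovász number is $\vartheta(G)=\max \sum_{j\in V} w_j (\langle \psi|v_j\rangle)^2$, where $|\psi\rangle$ and $|v_j\rangle$, $j\in V$, run over all real unit vectors (of any dimension) such that $\langle v_i|v_j\rangle=0$ whenever vertices $i,j$ are connected. Its complex generalization is $\vartheta_c(G)=\max \sum_{j\in V} w_j |\langle \psi|v_j\rangle|^2$, where $|\psi\rangle$ and $|v_j\rangle$ run over all complex unit vectors such that $\langle v_i|v_j\rangle=0$ whenever vertices $i,j$ are connected. A Lovász-optimum orthogonal representation is a choice of such vectors attaining the maximum. *)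

(* Defs.v *)
From HB Require Import structures.
From mathcomp Require Import all_boot all_order all_algebra.
Set Implicit Arguments. Unset Strict Implicit. Unset Printing Implicit Defensive.
Import Order.TTheory GRing.Theory Num.Theory.
Local Open Scope ring_scope.

Section Lovasz.
Variable C : numClosedFieldType.

Definition dotc (d : nat) (u v : 'cV[C]_d) : C :=
  \sum_(k < d) (u k 0)^* * v k 0.

Definition unitv (d : nat) (u : 'cV[C]_d) : Prop := dotc u u = 1.

(* a vector all of whose coordinates are real, i.e. an element of R^d *)
Definition realv (d : nat) (u : 'cV[C]_d) : Prop :=
  forall k, u k 0 \is Num.real.

Variable V : finType.

Definition orth_rep (E : rel V) (d : nat) (psi : 'cV[C]_d)
  (v : V -> 'cV[C]_d) : Prop :=
  [/\ unitv psi, forall j, unitv (v j)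
    & forall i j, E i j -> dotc (v i) (v j) = 0].

Definition real_orth_rep (E : rel V) (d : nat) (psi : 'cV[C]_d)
  (v : V -> 'cV[C]_d) : Prop :=
  [/\ orth_rep E psi v, realv psi & forall j, realv (v j)].

Definition lov_value (w : V -> C) (d : nat) (psi : 'cV[C]_d)
  (v : V -> 'cV[C]_d) : C :=
  \sum_j w j * `|dotc psi (v j)| ^+ 2.

Definition achievable_c (E : rel V) (w : V -> C) (t : C) : Prop :=
  exists d (psi : 'cV[C]_d) (v : V -> 'cV[C]_d),
    orth_rep E psi v /\ lov_value w psi v = t.

Definition achievable_r (E : rel V) (w : V -> C) (t : C) : Prop :=
  exists d (psi : 'cV[C]_d) (v : V -> 'cV[C]_d),
    real_orth_rep E psi v /\ lov_value w psi v = t.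

Definition is_theta_c (E : rel V) (w : V -> C) (t : C) : Prop :=
  achievable_c E w t /\ forall s, achievable_c E w s -> s <= t.

Definition is_theta (E : rel V) (w : V -> C) (t : C) : Prop :=
  achievable_r E w t /\ forall s, achievable_r E w s -> s <= t.

End Lovasz.

(* Main.v *)
Set Warnings "-notation-overridden,-ambiguous-paths".
Require Import Defs.
From HB Require Import structures.
From mathcomp Require Import all_boot all_order all_algebra ring.
Import Order.TTheory GRing.Theory Num.Theory.
Local Open Scope ring_scope.

Section H.
Variable C : numClosedFieldType.
Implicit Types (f g x y a b : nat -> C).

Definition dn (n : nat) f g : C := \sum_(k < n) f k * g k.
Definition rl f := forall k, f k \is Num.real.

Lemma dn_subl n x y z : dn n (fun k => x k - y k) z = dn n x z - dn n y z.
Proof. by rewrite /dn -sumrB; apply: eq_bigr => k _; rewrite mulrBl. Qed.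
Lemma dn_subr n x y z : dn n z (fun k => x k - y k) = dn n z x - dn n z y.
Proof. by rewrite /dn -sumrB; apply: eq_bigr => k _; rewrite mulrBr. Qed.
Lemma dn_scall n c x z : dn n (fun k => c * x k) z = c * dn n x z.
Proof. by rewrite /dn mulr_sumr; apply: eq_bigr => k _; rewrite mulrA. Qed.
Lemma dn_scalr n c x z : dn n z (fun k => c * x k) = c * dn n z x.
Proof. by rewrite /dn mulr_sumr; apply: eq_bigr => k _; rewrite mulrCA. Qed.
Lemma dnC n x y : dn n x y = dn n y x.
Proof. by apply: eq_bigr => k _; rewrite mulrC. Qed.

Lemma dn_e M x : dn M.+1 (fun k => (k == M)%:R) x = x M.
Proof.
rewrite /dn big_ord_recr /= eqxx mul1r big1 ?add0r // => i _.
by rewrite /= ltn_eqF ?mul0r.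
Qed.

Lemma trunc M f g : f M = 0 -> dn M.+1 f g = dn M f g.
Proof. by move=> h; rewrite /dn big_ord_recr /= h mul0r addr0. Qed.

Lemma dn_lin n x y b (al be : C) :
  dn n (fun k => x k - al * b k) (fun k => y k - be * b k) =
  dn n x y - be * dn n x b - al * dn n b y + al * be * dn n b b.
Proof.
rewrite /dn !mulr_sumr -!sumrB -big_split /=; apply: eq_bigr => k _; ring.
Qed.

Definition hh M a x : nat -> C :=
  let b := fun k => a k - (k == M)%:R in
  let bb := dn M.+1 b b in
  if bb == 0 then x else fun k => x k - (2 / bb * dn M.+1 b x) * b k.

Lemma hh_real M a x : rl a -> rl x -> rl (hh M a x).
Proof.
move=> ra rx; rewrite /hh; case: ifP => // _ k.
have rb : forall k, a k - (k == M)%:R \is Num.real by move=> j; rewrite rpredB ?rpred_nat.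
by rewrite /dn rpredB ?rpredM ?rpredV ?rpred_nat ?rpred_sum // => i _; rewrite rpredM.
Qed.

Lemma hh_dot M a x y : dn M.+1 (hh M a x) (hh M a y) = dn M.+1 x y.
Proof.
rewrite /hh; case: ifP => // /negbT nz.
rewrite (dn_lin _ _ _ (fun k => a k - (k == M)%:R)).
move: nz; set bb := dn _ _ _; set p := dn _ _ x; set q := dn _ _ y => nz.
rewrite (dnC _ x) (dnC _ _ y) -/p -/q.
by field.
Qed.

Lemma hh_last M a x : rl a -> dn M.+1 a a = 1 -> dn M.+1 a x = 0 ->
  hh M a x M = 0.
Proof.
move=> ra aa ax; rewrite /hh; case: ifP => [/eqP bb0 | /negbT nz].
  have hb : forall k : 'I_M.+1, (a k - ((k:nat) == M)%:R) = 0.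
    move=> k; apply/eqP; rewrite -sqrf_eq0; apply/eqP.
    move: bb0; rewrite /dn => /eqP; rewrite psumr_eq0 => [/allP h|i _].
      by apply/eqP; rewrite expr2; apply: (h k); rewrite mem_index_enum.
    rewrite -expr2 -real_normK ?exprn_ge0 ?rpredB ?rpred_nat //.
  suff <- : dn M.+1 a x = x M by [].
  rewrite -dn_e; apply: eq_bigr => k _; congr (_ * _).
  by apply/eqP; rewrite -subr_eq0 hb.
set b := fun k => _ in nz *.
have e1 : dn M.+1 b b = 2 - 2 * a M.
  rewrite /b dn_subl !dn_subr !dn_e (dnC _ a (fun k => (k == M)%:R)) dn_e aa eqxx /=; ring.
have e2 : dn M.+1 b x = - x M.
  by rewrite /b dn_subl ax dn_e sub0r.
rewrite e1 e2 eqxx /=; move: nz; rewrite e1 => nz.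
by field.
Qed.

Definition fu d (u : 'cV[C]_d) (k : nat) : C := oapp (fun i : 'I_d => u i 0) 0 (insub k).
Arguments fu {d}.
Lemma fuE d (u : 'cV[C]_d) (i : 'I_d) : fu u i = u i 0.
Proof. by rewrite /fu valK. Qed.

Definition rz d (u : 'cV[C]_d) (k : nat) : C :=
  if (k < d)%N then 'Re (fu u k) else 'Im (fu u (k - d)).

Arguments rz {d}.
Lemma rz_real d (u : 'cV[C]_d) : rl (rz u).
Proof. by move=> k; rewrite /rz; case: ifP => _; rewrite ?Creal_Re ?Creal_Im. Qed.

Lemma rz_dot d (u v : 'cV[C]_d) : dn (d + d) (rz u) (rz v) = 'Re (dotc u v).
Proof.
rewrite /dn big_split_ord /= /dotc raddf_sum -big_split /=.
apply: eq_bigr => i _; rewrite /rz /= ltn_ord ltnNge leq_addr /= addKn !fuE.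
by rewrite ReM Re_conj Im_conj; ring.
Qed.

Lemma dotc_scall d (u v : 'cV[C]_d) c : dotc (c *: u) v = c^* * dotc u v.
Proof.
rewrite /dotc mulr_sumr; apply: eq_bigr => k _; rewrite !mxE rmorphM /=; ring.
Qed.
Lemma dotc_scalr d (u v : 'cV[C]_d) c : dotc u (c *: v) = c * dotc u v.
Proof.
rewrite /dotc mulr_sumr; apply: eq_bigr => k _; rewrite !mxE; ring.
Qed.

Lemma dotc_col M (f g : nat -> C) : rl f ->
  dotc (\col_(k < M) f k) (\col_(k < M) g k) = dn M f g.
Proof.
move=> rf; apply: eq_bigr => k _; rewrite !mxE conj_Creal //.
Qed.


Lemma key (V : finType) (E : rel V) (w : V -> C)
  (d : nat) (psi : 'cV[C]_d) (v : V -> 'cV[C]_d) :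
  orth_rep E psi v ->
  exists (phi : 'cV[C]_(2 * d).-1) (om : V -> 'cV[C]_(2 * d).-1),
      real_orth_rep E phi om /\ lov_value w phi om = lov_value w psi v.
Proof.
case=> upsi uv ov.
have d0 : (0 < d)%N.
  case: d psi upsi {uv ov v} => // psi; rewrite /unitv /dotc big_ord0 => /eqP.
  by rewrite eq_sym oner_eq0.
set M := (2 * d).-1.
have hN : M.+1 = (d + d)%N by rewrite /M prednK ?addnn ?mul2n // double_gt0.
pose z j := dotc psi (v j).
pose s j : C := if z j == 0 then 1 else (z j)^* / `|z j|.
have ss : forall j, (s j)^* * s j = 1.
  move=> j; rewrite /s; case: ifP => [_|/negbT nz]; first by rewrite rmorph1 mulr1.
  rewrite rmorphM fmorphV /= conjCK (conj_Creal (normr_real _)).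
  have nz' : `|z j| != 0 by rewrite normr_eq0.
  rewrite mulrACA -normCK; field.
  by [].
have sz : forall j, s j * z j = `|z j|.
  move=> j; rewrite /s; case: ifP => [/eqP ->|/negbT nz]; first by rewrite mul1r normr0.
  have nz' : `|z j| != 0 by rewrite normr_eq0.
  rewrite mulrAC -normCKC; field.
  by [].
pose v' j := s j *: v j.
pose a := rz ('i *: psi).
have ra : rl a by apply: rz_real.
have aa : dn M.+1 a a = 1.
  rewrite hN rz_dot dotc_scall dotc_scalr upsi mulr1 conjCi mulNr mulCii opprK.
  by apply/Creal_ReP; rewrite rpred1.
pose F (u : 'cV[C]_d) := \col_(k < M) hh M a (rz u) k.
have hF : forall u u', 'Re (dotc ('i *: psi) u) = 0 -> 'Re (dotc ('i *: psi) u') = 0 ->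
   dotc (F u) (F u') = 'Re (dotc u u').
  move=> u u' h1 h2; rewrite dotc_col; last by apply: hh_real => //; apply: rz_real.
  rewrite -trunc; last by apply: hh_last => //; rewrite hN rz_dot.
  by rewrite hh_dot hN rz_dot.
have Rp : 'Re (dotc ('i *: psi) psi) = 0.
  by rewrite dotc_scall upsi mulr1 conjCi raddfN /= Re_i oppr0.
have Rv : forall j, 'Re (dotc ('i *: psi) (v' j)) = 0.
  move=> j; rewrite dotc_scall dotc_scalr sz conjCi mulNr raddfN /= ReMil.
  by rewrite opprK (Creal_ImP _ (normr_real _)).
have Fr : forall u, realv (F u).
  by move=> u k; rewrite mxE; apply: hh_real => //; apply: rz_real.
exists (F psi), (fun j => F (v' j)); split; first split.
- split.
  + by rewrite /unitv hF // upsi; apply/Creal_ReP; rewrite rpred1.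
  + move=> j; rewrite /unitv hF // /v' dotc_scall dotc_scalr uv mulr1 ss.
    by apply/Creal_ReP; rewrite rpred1.
  + move=> i j hij; rewrite hF // /v' dotc_scall dotc_scalr ov // !mulr0.
    by rewrite raddf0.
- exact: Fr.
- by move=> j; apply: Fr.
rewrite /lov_value; apply: eq_bigr => j _; rewrite hF // /v' dotc_scalr -/(z j) sz.
by rewrite (Creal_ReP _ (normr_real _)) normr_id.
Qed.
End H.

Theorem mainTheorem1 (C : numClosedFieldType) (V : finType) (E : rel V)
  (E_sym : symmetric E) (E_irr : irreflexive E)
  (w : V -> C) (w_ge0 : forall j, 0 <= w j)
  (d : nat) (psi : 'cV[C]_d) (v : V -> 'cV[C]_d) :
  orth_rep E psi v ->
  is_theta_c E w (lov_value w psi v) ->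
  (exists (phi : 'cV[C]_(2 * d).-1) (om : V -> 'cV[C]_(2 * d).-1),
      real_orth_rep E phi om /\ lov_value w phi om = lov_value w psi v)
  /\ is_theta E w (lov_value w psi v).
Proof.
move=> hor [_ hmax].
have [phi [om [hr hv]]] := @key C V E w d psi v hor.
split; first by exists phi, om.
split; first by exists (2 * d).-1, phi, om.
move=> t [d' [psi' [v' [[ho _ _] ht]]]].
by apply: hmax; exists d', psi', v'.
Qed.
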